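(* At each $t$ where $g(t)=S(t)^{-1}\bar S(t)$, the matrix $J=S\Upsilon_1S^{-1}$ satisfies, for every $j\ge1$, $$J^j=\sum_{a=1}^{p_1}L_a^j=\sum_{b=1}^{p_2}\bar L_b^j,$$ and $J^j\mathcal A_{a'}=x^j\mathcal A_{a'}$, $(J^j)^\top\bar{\mathcal A}_{b'}=x^j\bar{\mathcal A}_{b'}$ for $a'=1,\dots,p_1$, $b'=1,\dots,p_2$.
   Context: $\mu$ finite Borel measure on an interval; weights $w_{1,a}$ ($a\le p_1$), $w_{2,b}$ ($b\le p_2$); compositions $\vec n_\ell\in\mathbb N^{p_\ell}$; each $i\in\mathbb Z_+$ is uniquely $i=q|\vec n_\ell|+n_{\ell,1}+\dots+n_{\ell,a-1}+r$ ($0\le r<n_{\ell,a}$), $a_\ell(i)=a$, $k_\ell(i)=qn_{\ell,a}+r$; moment matrix $g_{i,j}=\int x^{k_1(i)+k_2(j)}w_{1,a_1(i)}w_{2,a_2(j)}d\mu$. $e_{\ell,a}(k)=e_i$ with $a_\ell(i)=a,k_\ell(i)=k$; $\Lambda_{\ell,a}=\sum_ke_{\ell,a}(k)e_{\ell,a}(k+1)^\top$, $\Upsilon_\ell=\sum_a\Lambda_{\ell,a}$; $\chi_{\ell,a}(x)=\sum_ke_{\ell,a}(k)x^k$. Real times $t=(t_{j,a},\bar t_{j,b})$; $W_0(t)=\exp(\sum_{a,j}t_{j,a}\Lambda_{1,a}^j)$, $\bar W_0(t)=\exp(\sum_{b,j}\bar t_{j,b}(\Lambda_{2,b}^\top)^j)$,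 $g(t)=W_0(t)g\bar W_0(t)^{-1}$ (integrals assumed convergent), factorized as $g(t)=S(t)^{-1}\bar S(t)$ with $S$ unit lower triangular and $\bar S$ upper triangular invertible. $L_a=S\Lambda_{1,a}S^{-1}$, $\bar L_b=\bar S\Lambda_{2,b}^\top\bar S^{-1}$, $\mathcal A_a=S\chi_{1,a}(x)$, $\bar{\mathcal A}_b=(\bar S^{-1})^\top\chi_{2,b}(x)$. *)

(* Defs.v *)
From HB Require Import structures.
From mathcomp Require Import all_boot all_order all_algebra.
From mathcomp Require Import all_classical all_reals all_analysis.
Set Implicit Arguments. Unset Strict Implicit. Unset Printing Implicit Defensive.
Import Order.TTheory GRing.Theory Num.Theory.
Import numFieldNormedType.Exports.
Local Open Scope classical_set_scope.
Local Open Scope ring_scope.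

(* Indices i, j of semi-infinite matrices range over nat (= Z_+ of the paper).
   Block labels a range over 0 <= a < p (paper: 1 <= a <= p).
   A composition is a function n : nat -> nat of which only n 0, ..., n (p-1)
   are used. *)

Definition ctot (p : nat) (n : nat -> nat) : nat := (\sum_(a < p) n a)%N.
Definition cpre (n : nat -> nat) (a : nat) : nat := (\sum_(b < a) n b)%N.

(** a(i): the block label of i, i.e. the unique a with
    cpre a <= i mod |n| < cpre (a+1). *)
Definition cblk (p : nat) (n : nat -> nat) (i : nat) : nat :=
  find (fun a => i %% ctot p n < cpre n a.+1)%N (iota 0 p).

(** k(i) = q n_a + r  where  i = q |n| + n_1 + ... + n_{a-1} + r, 0 <= r < n_a *)
Definition ckk (p : nat) (n : nat -> nat) (i : nat) : nat :=
  (i %/ ctot p n * n (cblk p n i) + (i %% ctot p n - cpre n (cblk p n i)))%N.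

Definition smat (R : Type) := nat -> nat -> R.
Definition svec (R : Type) := nat -> R.

Section SemiInfinite.
Variable R : realType.

Definition idm : smat R := fun i j => (i == j)%:R.
Definition trm (A : smat R) : smat R := fun i j => A j i.
Definition madd (A B : smat R) : smat R := fun i j => A i j + B i j.
Definition mopp (A : smat R) : smat R := fun i j => - A i j.

Definition mmul (A B : smat R) : smat R :=
  fun i j => limn (fun N => \sum_(k < N) A i k * B k j).

Definition mvec (A : smat R) (v : svec R) : svec R :=
  fun i => limn (fun N => \sum_(k < N) A i k * v k).

Definition mpow (A : smat R) (m : nat) : smat R := iter m (mmul A) idm.

Definition mexp (A : smat R) : smat R :=
  fun i j => limn (fun N => \sum_(m < N) mpow A m i j / (m`!)%:R).

(** Lambda_{l,a} = sum_k e_{l,a}(k) e_{l,a}(k+1)^T, written entrywise: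
    the (i,i') entry is 1 iff a(i) = a(i') = a and k(i') = k(i) + 1. *)
Definition Lam (p : nat) (n : nat -> nat) (a : nat) : smat R :=
  fun i i' => ((cblk p n i == a) && (cblk p n i' == a)
               && (ckk p n i' == (ckk p n i).+1))%:R.

Definition Ups (p : nat) (n : nat -> nat) : smat R :=
  fun i i' => \sum_(a < p) Lam p n a i i'.

Definition chi (p : nat) (n : nat -> nat) (a : nat) (x : R) : svec R :=
  fun i => if cblk p n i == a then x ^+ ckk p n i else 0.

Definition moment (mu : {measure set R -> \bar R}) (I : interval R)
  (p1 p2 : nat) (n1 n2 : nat -> nat) (w1 w2 : nat -> R -> R) : smat R :=
  fun i j => Rintegral mu [set` I]
    (fun x => x ^+ (ckk p1 n1 i + ckk p2 n2 j) * w1 (cblk p1 n1 i) x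
              * w2 (cblk p2 n2 j) x).

(** sum_{a} sum_{j>=1} t_{j,a} Lambda_a^j  where Lambda_a := L a;
    the times are t a j = t_{j,a} (only j >= 1 is used). *)
Definition tflow (p : nat) (L : nat -> smat R) (t : nat -> nat -> R) : smat R :=
  fun i i' => \sum_(a < p)
     limn (fun N => \sum_(j < N) t a j.+1 * mpow (L a) j.+1 i i').

Definition W0 (p1 : nat) (n1 : nat -> nat) (t : nat -> nat -> R) : smat R :=
  mexp (tflow p1 (Lam p1 n1) t).

Definition Wb0 (p2 : nat) (n2 : nat -> nat) (tb : nat -> nat -> R) : smat R :=
  mexp (tflow p2 (fun b => trm (Lam p2 n2 b)) tb).
Definition Wb0inv (p2 : nat) (n2 : nat -> nat) (tb : nat -> nat -> R) : smat R :=
  mexp (mopp (tflow p2 (fun b => trm (Lam p2 n2 b)) tb)).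

Definition gt (p1 p2 : nat) (n1 n2 : nat -> nat) (g : smat R)
  (t tb : nat -> nat -> R) : smat R :=
  mmul (mmul (W0 p1 n1 t) g) (Wb0inv p2 n2 tb).

Definition lower_tri (A : smat R) : Prop := forall i j, (i < j)%N -> A i j = 0.
Definition upper_tri (A : smat R) : Prop := forall i j, (j < i)%N -> A i j = 0.

End SemiInfinite.

(* Main.v *)
Require Import Defs.
From HB Require Import structures.
From mathcomp Require Import all_boot all_order all_algebra.
From mathcomp Require Import all_classical all_reals all_analysis.
From mathcomp Require Import zify.
Import Order.TTheory GRing.Theory Num.Theory.
Import numFieldNormedType.Exports.

Module Comb4.
Local Set Implicit Arguments. Local Unset Strict Implicit.

Lemma find_iota0 (P : pred nat) p a : a < p -> P a -> (forall b, b < a -> ~~ P b) ->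
  find P (iota 0 p) = a.
Proof.
move=> hap hPa hb.
have hhas : has P (iota 0 p) by apply/hasP; exists a => //; rewrite mem_iota.
have hf : find P (iota 0 p) < p by rewrite -[X in _ < X](size_iota 0 p) -has_find.
have := nth_find 0 hhas; rewrite nth_iota // add0n => hPf.
case: (ltngtP (find P (iota 0 p)) a) => // h.
- by move: (hb _ h); rewrite hPf.
- by move: (before_find 0 h); rewrite nth_iota // add0n hPa.
Qed.

Section Comb.
Variables (p : nat) (n : nat -> nat).
Hypothesis hp : 0 < p.
Hypothesis hn : forall a, a < p -> 0 < n a.

Local Notation tot := (ctot p n).
Local Notation pre := (cpre n).

Lemma preS a : pre a.+1 = pre a + n a.
Proof. by rewrite /cpre big_ord_recr. Qed.

Lemma pre_mono a b : a <= b -> pre a <= pre b.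
Proof.
move=> /subnK <-; elim: (b - a) => [|k IH] //.
by rewrite addSn preS; apply: leq_trans IH (leq_addr _ _).
Qed.

Lemma tot_pre : tot = pre p. Proof. by []. Qed.

Lemma tot_gt0 : 0 < tot.
Proof.
rewrite tot_pre; apply: leq_trans (pre_mono hp).
by rewrite preS /cpre big_ord0 add0n hn.
Qed.

Lemma pre_n_le a : a < p -> pre a + n a <= tot.
Proof. by move=> hap; rewrite -preS tot_pre pre_mono. Qed.

Lemma cblk_spec i : cblk p n i < p /\
  pre (cblk p n i) <= i %% tot < pre (cblk p n i) + n (cblk p n i).
Proof.
set P := (fun a => i %% tot < pre a.+1).
have hr : i %% tot < tot by rewrite ltn_pmod // tot_gt0.
have hhas : has P (iota 0 p).
  apply/hasP; exists p.-1; first by rewrite mem_iota; lia.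
  by rewrite /P prednK.
have hf : find P (iota 0 p) < p by rewrite -[X in _ < X](size_iota 0 p) -has_find.
rewrite /cblk -/P; split => //.
have := nth_find 0 hhas; rewrite nth_iota // add0n /P preS => ->.
rewrite andbT; case e: (find P (iota 0 p)) => [|f]; first by rewrite /cpre big_ord0.
have hb : f < find P (iota 0 p) by rewrite e.
move: (before_find 0 hb); rewrite nth_iota ?add0n ?/P; last first.
  by rewrite e in hf; apply: ltn_trans hf.
by move/negbT; rewrite -leqNgt.
Qed.

Lemma cblk_eq i a : a < p -> pre a <= i %% tot < pre a + n a -> cblk p n i = a.
Proof.
move=> hap /andP[h1 h2]; apply: find_iota0 => //; first by rewrite preS.
move=> b hb; rewrite -leqNgt; apply: leq_trans h1; exact: pre_mono.
Qed.

Lemma cblk_lt i : cblk p n i < p. Proof. by case: (cblk_spec i). Qed.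

Definition idx a c := c %/ n a * tot + (pre a + c %% n a).

Lemma idx_qr a q r : a < p -> r < n a -> idx a (q * n a + r) = q * tot + (pre a + r).
Proof.
move=> hap hr; rewrite /idx divnMDl ?hn // divn_small // addn0.
by rewrite modnMDl modn_small.
Qed.

Lemma idx_mod a c : a < p -> idx a c %% tot = pre a + c %% n a.
Proof.
move=> hap; rewrite /idx modnMDl (@modn_small (pre a + _)) //.
apply: (leq_trans _ (pre_n_le hap)); rewrite ltn_add2l ltn_pmod //; exact: hn.
Qed.

Lemma idx_div a c : a < p -> idx a c %/ tot = c %/ n a.
Proof.
move=> hap; rewrite /idx divnMDl ?tot_gt0 // (@divn_small (pre a + _)) ?addn0 //.
apply: (leq_trans _ (pre_n_le hap)); rewrite ltn_add2l ltn_pmod //; exact: hn.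
Qed.

Lemma cblk_idx a c : a < p -> cblk p n (idx a c) = a.
Proof.
move=> hap; apply: cblk_eq => //; rewrite idx_mod // leq_addr /= ltn_add2l.
by rewrite ltn_pmod // hn.
Qed.

Lemma ckk_idx a c : a < p -> ckk p n (idx a c) = c.
Proof.
move=> hap; rewrite /ckk cblk_idx // idx_div // idx_mod // addKn.
by rewrite -divn_eq.
Qed.

Lemma idx_ckk i : idx (cblk p n i) (ckk p n i) = i.
Proof.
have [ha /andP[h1 h2]] := cblk_spec i.
set a := cblk p n i in ha h1 h2 *.
have hr : i %% tot - pre a < n a by rewrite ltn_subLR.
rewrite /ckk -/a idx_qr // subnKC //.
by rewrite -divn_eq.
Qed.

Lemma blk_inj i k : cblk p n i = cblk p n k -> ckk p n i = ckk p n k -> i = k.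
Proof. by move=> h1 h2; rewrite -(idx_ckk i) -(idx_ckk k) h1 h2. Qed.

Definition sI i := idx (cblk p n i) (ckk p n i).+1.

Lemma cblk_s i : cblk p n (sI i) = cblk p n i.
Proof. by rewrite /sI cblk_idx // cblk_lt. Qed.

Lemma ckk_s i : ckk p n (sI i) = (ckk p n i).+1.
Proof. by rewrite /sI ckk_idx // cblk_lt. Qed.

Lemma sI_inj : injective sI.
Proof.
move=> i k e; apply: blk_inj.
  by rewrite -cblk_s e cblk_s.
by apply/eqP; rewrite -eqSS -!ckk_s e.
Qed.

Lemma s_idx a c : a < p -> sI (idx a c) = idx a c.+1.
Proof. by move=> hap; rewrite /sI cblk_idx // ckk_idx. Qed.

Lemma idx_step a c : a < p -> idx a c < idx a c.+1.
Proof.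
move=> hap.
have hna := hn hap.
have hle := pre_n_le hap.
rewrite {2}(divn_eq c (n a)) {1}(divn_eq c (n a)).
have hr := ltn_pmod c hna.
set q := c %/ n a; set r := c %% n a.
rewrite idx_qr //.
have -> : (q * n a + r).+1 = q * n a + r.+1 by rewrite addnS.
case: (ltnP r.+1 (n a)) => h.
  by rewrite idx_qr //; lia.
have er : r.+1 = n a by apply/eqP; rewrite eqn_leq h hr.
rewrite er -mulSnr -[X in idx a X]addn0 idx_qr //.
rewrite mulSnr; lia.
Qed.

Lemma idx_lt a c c' : a < p -> c < c' -> idx a c < idx a c'.
Proof.
move=> hap; elim: c' => // c' IH.
rewrite ltnS leq_eqVlt => /orP[/eqP->|h]; first exact: idx_step.
by apply: ltn_trans (IH h) (idx_step _ hap).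
Qed.

Lemma idx_inj a c c' : a < p -> idx a c = idx a c' -> c = c'.
Proof. by move=> hap e; rewrite -(ckk_idx c hap) e ckk_idx. Qed.

End Comb.

End Comb4.
Import Comb4.

Local Open Scope ring_scope.

Section H.
Variable R : realType.

Lemma lim_eq_comp (v w : nat -> R) (C f : nat -> nat) :
  (C n @[n --> \oo] --> \oo)%classic -> (f n @[n --> \oo] --> \oo)%classic ->
  (forall n, v n = w (C n)) -> (forall k, w k = v (f k)) -> limn v = limn w.
Proof.
move=> hC hf hv hw.
have ev : v = w \o C by apply/funext => n; rewrite hv.
have ew : w = v \o f by apply/funext => n; rewrite hw.
rewrite /lim /lim_in; congr get; apply/funext => l; apply/propext; split => h.
- by rewrite ew; apply: cvg_comp hf h.
- by rewrite ev; apply: cvg_comp hC h.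
Qed.

Lemma limn_shiftS (u : nat -> R) : limn (fun n => u n.+1) = limn u.
Proof.
rewrite /lim /lim_in; congr get; apply/funext => l; apply/propext.
by rewrite -(cvg_shiftS u).
Qed.

Lemma limn_evcst (u : nat -> R) K c : (forall n, (K <= n)%N -> u n = c) -> limn u = c.
Proof.
move=> h; apply: norm_lim_near_cst.
by near=> n; apply: h; near: n; apply: nbhs_infty_ge.
Unshelve. all: end_near.
Qed.

Lemma sum_ord_bound (a : nat -> R) K N : (K <= N)%N -> (forall k, (K <= k)%N -> a k = 0) ->
  \sum_(k < N) a k = \sum_(k < K) a k.
Proof.
move=> hKN h.
rewrite -!(big_mkord xpredT) (big_cat_nat (leq0n K) hKN) /=.
rewrite [X in _ + X = _]big_nat_cond [X in _ + X = _]big1 ?addr0 // => k /andP[/andP[hk _] _].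
exact: h.
Qed.

Lemma limn_sum_bound (a : nat -> R) K : (forall k, (K <= k)%N -> a k = 0) ->
  limn (fun N => \sum_(k < N) a k) = \sum_(k < K) a k.
Proof. by move=> h; apply: (@limn_evcst _ K) => n hn; apply: sum_ord_bound. Qed.

End H.


Section Fin.
Context {R : realType}.
Implicit Types A B C : smat R.

Definition rowfin A := forall i, exists K, forall k, (K <= k)%N -> A i k = 0.

Lemma mmul_rowb A B i j K : (forall k, (K <= k)%N -> A i k = 0) ->
  mmul A B i j = \sum_(k < K) A i k * B k j.
Proof. by move=> h; rewrite /mmul (@limn_sum_bound R (fun k => A i k * B k j) K) // => k /h ->; rewrite mul0r. Qed.
Arguments mmul_rowb [A B i j K].

Lemma mmul_colb A B i j K : (forall k, (K <= k)%N -> B k j = 0) ->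
  mmul A B i j = \sum_(k < K) A i k * B k j.
Proof. by move=> h; rewrite /mmul (@limn_sum_bound R (fun k => A i k * B k j) K) // => k /h ->; rewrite mulr0. Qed.
Arguments mmul_colb [A B i j K].

Lemma mvec_b A v i K : (forall k, (K <= k)%N -> A i k = 0) ->
  mvec A v i = \sum_(k < K) A i k * v k.
Proof. by move=> h; rewrite /mvec (@limn_sum_bound R (fun k => A i k * v k) K) // => k /h ->; rewrite mul0r. Qed.
Arguments mvec_b [A v i K].

Lemma trm_mmul A B : trm (mmul A B) = mmul (trm B) (trm A).
Proof.
apply/funext => i; apply/funext => j; rewrite /trm /mmul; congr (limn _).
by apply/funext => N; apply: eq_bigr => k _; rewrite mulrC.
Qed.

Lemma trmK A : trm (trm A) = A. Proof. by []. Qed.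

Lemma trm_idm : trm (idm R) = idm R.
Proof. by apply/funext => i; apply/funext => j; rewrite /trm /idm eq_sym. Qed.

Lemma common_bound A : rowfin A -> forall K, exists M, forall k, (k < K)%N ->
  forall l, (M <= l)%N -> A k l = 0.
Proof.
move=> hA; elim=> [|K [M hM]]; first by exists 0%N.
have [M' hM'] := hA K.
exists (maxn M M') => k; rewrite ltnS leq_eqVlt => /orP[/eqP->|hk] l hl.
- by apply: hM'; apply: leq_trans hl; apply: leq_maxr.
- by apply: hM => //; apply: leq_trans hl; apply: leq_maxl.
Qed.
Arguments common_bound [A].

Lemma common_bound_fam (F : nat -> smat R) p : (forall a, rowfin (F a)) ->
  forall i, exists K, forall a, (a < p)%N -> forall k, (K <= k)%N -> F a i k = 0.
Proof.
move=> hF i; elim: p => [|p [M hM]]; first by exists 0%N.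
have [M' hM'] := hF p i.
exists (maxn M M') => a; rewrite ltnS leq_eqVlt => /orP[/eqP->|ha] k hk.
- by apply: hM'; apply: leq_trans hk; apply: leq_maxr.
- by apply: hM => //; apply: leq_trans hk; apply: leq_maxl.
Qed.
Arguments common_bound_fam [F].

Lemma rowfin_mmul A B : rowfin A -> rowfin B -> rowfin (mmul A B).
Proof.
move=> hA hB i; have [K hK] := hA i; have [M hM] := common_bound hB K.
exists M => l hl; rewrite (mmul_rowb hK) big1 // => k _.
by rewrite (hM k (ltn_ord k) l hl) mulr0.
Qed.

Lemma mmulA_rr A B C : rowfin A -> rowfin B ->
  mmul (mmul A B) C = mmul A (mmul B C).
Proof.
move=> hA hB; apply/funext => i; apply/funext => j.
have [K hK] := hA i; have [M hM] := common_bound hB K.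
have hAB : forall l, (M <= l)%N -> mmul A B i l = 0.
  move=> l hl; rewrite (mmul_rowb hK) big1 // => k _.
  by rewrite (hM k (ltn_ord k) l hl) mulr0.
rewrite (mmul_rowb hAB) (mmul_rowb hK).
under eq_bigr => l _ do rewrite (mmul_rowb hK) mulr_suml.
rewrite exchange_big /=; apply: eq_bigr => k _.
rewrite (mmul_rowb (hM k (ltn_ord k))) mulr_sumr.
by apply: eq_bigr => l _; rewrite mulrA.
Qed.

Lemma mmulA_rc A B C : rowfin A -> rowfin (trm C) ->
  mmul A (mmul B C) = mmul (mmul A B) C.
Proof.
move=> hA hC; apply/funext => i; apply/funext => j.
have [K hK] := hA i; have [L hL] := hC j.
rewrite (mmul_rowb hK) (mmul_colb hL).
under eq_bigr => k _ do rewrite (mmul_colb hL) mulr_sumr.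
rewrite exchange_big /=; apply: eq_bigr => l _.
rewrite (mmul_rowb hK) mulr_suml.
by apply: eq_bigr => k _; rewrite mulrA.
Qed.

Lemma rowfin_idm : rowfin (idm R).
Proof.
move=> i; exists i.+1 => k hk; rewrite /idm.
by case: eqP => // e; move: hk; rewrite e ltnn.
Qed.

Lemma mmul1l A : mmul (idm R) A = A.
Proof.
apply/funext => i; apply/funext => j.
have [K hK] := rowfin_idm i.
rewrite (mmul_rowb (K:=i.+1)); last first.
  by move=> k hk; rewrite /idm; case: eqP => // e; move: hk; rewrite e ltnn.
rewrite big_ord_recr /= /idm eqxx mul1r big1 ?add0r // => k _.
by rewrite eq_sym (ltn_eqF (ltn_ord k)) mul0r.
Qed.

Lemma mmul1r A : mmul A (idm R) = A.
Proof.
apply/funext => i; apply/funext => j.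
rewrite (mmul_colb (K:=j.+1)); last first.
  by move=> k hk; rewrite /idm; case: eqP => // e; move: hk; rewrite e ltnn.
rewrite big_ord_recr /= /idm eqxx mulr1 big1 ?add0r // => k _.
by rewrite (ltn_eqF (ltn_ord k)) mulr0.
Qed.

Lemma mmul_sumr A (F : nat -> smat R) p : rowfin A ->
  mmul A (fun i j => \sum_(a < p) F a i j) = (fun i j => \sum_(a < p) mmul A (F a) i j).
Proof.
move=> hA; apply/funext => i; apply/funext => j.
have [K hK] := hA i.
rewrite (mmul_rowb hK).
under eq_bigr => k _ do rewrite mulr_sumr.
rewrite exchange_big /=; apply: eq_bigr => a _.
by rewrite (mmul_rowb hK).
Qed.

Lemma mmul_suml (F : nat -> smat R) C p : (forall a, rowfin (F a)) ->
  mmul (fun i j => \sum_(a < p) F a i j) C = (fun i j => \sum_(a < p) mmul (F a) C i j).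
Proof.
move=> hF; apply/funext => i; apply/funext => j.
have [K hK] := common_bound_fam p hF i.
rewrite (mmul_rowb (K:=K)); last first.
  by move=> k hk; apply: big1 => a _; apply: hK.
under eq_bigr => k _ do rewrite mulr_suml.
rewrite exchange_big /=; apply: eq_bigr => a _.
by rewrite (mmul_rowb (K:=K)) // => k hk; apply: hK.
Qed.

Lemma rowfin_sum (F : nat -> smat R) p : (forall a, rowfin (F a)) ->
  rowfin (fun i j => \sum_(a < p) F a i j).
Proof.
move=> hF i; have [K hK] := common_bound_fam p hF i.
by exists K => k hk; apply: big1 => a _; apply: hK.
Qed.

Lemma rowfin_mpow A j : rowfin A -> rowfin (mpow A j).
Proof. by move=> hA; elim: j => [|j IH] /=; [exact: rowfin_idm|exact: rowfin_mmul]. Qed.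

Lemma mpowS A j : mpow A j.+1 = mmul A (mpow A j).
Proof. by []. Qed.

Lemma mpowSr A j : rowfin A -> mpow A j.+1 = mmul (mpow A j) A.
Proof.
move=> hA; elim: j => [|j IH]; first by rewrite mpowS /= mmul1r mmul1l.
by rewrite mpowS {1}IH -mmulA_rr //; exact: rowfin_mpow.
Qed.

Lemma trm_mpow A j : rowfin (trm A) -> trm (mpow A j) = mpow (trm A) j.
Proof.
move=> hA; elim: j => [|j IH]; first by rewrite /= trm_idm.
by rewrite mpowS trm_mmul IH -mpowSr.
Qed.

Lemma mvec_mmul A B v : rowfin A -> rowfin B ->
  mvec (mmul A B) v = mvec A (mvec B v).
Proof.
move=> hA hB; apply/funext => i.
have [K hK] := hA i; have [M hM] := common_bound hB K.
have hAB : forall l, (M <= l)%N -> mmul A B i l = 0.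
  move=> l hl; rewrite (mmul_rowb hK) big1 // => k _.
  by rewrite (hM k (ltn_ord k) l hl) mulr0.
rewrite (mvec_b hAB) (mvec_b hK).
under eq_bigr => l _ do rewrite (mmul_rowb hK) mulr_suml.
rewrite exchange_big /=; apply: eq_bigr => k _.
rewrite (mvec_b (hM k (ltn_ord k))) mulr_sumr.
by apply: eq_bigr => l _; rewrite mulrA.
Qed.

Lemma mvec_idm v : mvec (idm R) v = v.
Proof.
apply/funext => i.
rewrite (mvec_b (K:=i.+1)); last first.
  by move=> k hk; rewrite /idm; case: eqP => // e; move: hk; rewrite e ltnn.
rewrite big_ord_recr /= /idm eqxx mul1r big1 ?add0r // => k _.
by rewrite eq_sym (ltn_eqF (ltn_ord k)) mul0r.
Qed.

Lemma mvec_scale A (c : R) v : rowfin A ->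
  mvec A (fun i => c * v i) = (fun i => c * mvec A v i).
Proof.
move=> hA; apply/funext => i; have [K hK] := hA i.
rewrite !(mvec_b hK) mulr_sumr; apply: eq_bigr => k _.
by rewrite mulrCA.
Qed.

End Fin.
Arguments mmul_rowb {R} [A B i j K].
Arguments mmul_colb {R} [A B i j K].
Arguments mvec_b {R} [A v i K].
Arguments common_bound {R} [A].
Arguments common_bound_fam {R} [F].
Arguments rowfin_mmul {R} [A B].
Arguments rowfin_mpow {R} [A] j.
Arguments mmulA_rr {R} [A B] C.
Arguments mvec_mmul {R} [A B] v.
Arguments mpowSr {R} [A] j.
Arguments trm_mpow {R} [A] j.


Section GL.
Context {R : realType}.
Implicit Types A B C P Q M : smat R.

Lemma mmul0l B : mmul (fun _ _ => 0 : R) B = (fun _ _ => 0).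
Proof.
apply/funext => i; apply/funext => j.
by rewrite (mmul_rowb (K:=0%N)) ?big_ord0.
Qed.

Lemma conj_pow P Q M j : rowfin P -> rowfin Q -> rowfin M -> mmul Q P = idm R ->
  (1 <= j)%N -> mpow (mmul (mmul P M) Q) j = mmul (mmul P (mpow M j)) Q.
Proof.
move=> hP hQ hM hQP; elim: j => // -[|j] IH _.
  by rewrite /= !mmul1r.
rewrite mpowS IH //.
have hPM := rowfin_mmul hP hM.
have hMj := rowfin_mpow j.+1 hM.
set Mj := mpow M j.+1.
have e1 : mmul Q (mmul (mmul P Mj) Q) = mmul Mj Q.
  by rewrite -(mmulA_rr Q hQ (rowfin_mmul hP hMj)) -(mmulA_rr Mj hQ hP) hQP mmul1l.
rewrite (mmulA_rr _ hPM hQ) e1 (mmulA_rr _ hP hM) -(mmulA_rr _ hM hMj).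
by rewrite -(mmulA_rr _ hP (rowfin_mmul hM hMj)).
Qed.

Lemma GL P Q (Lm : nat -> smat R) p :
  rowfin P -> rowfin Q -> mmul Q P = idm R -> (forall a, rowfin (Lm a)) ->
  (forall a b, (a < p)%N -> (b < p)%N -> a != b -> mmul (Lm a) (Lm b) = (fun _ _ => 0)) ->
  forall j, (1 <= j)%N -> forall i k,
   mpow (mmul (mmul P (fun i k => \sum_(a < p) Lm a i k)) Q) j i k =
   \sum_(a < p) mpow (mmul (mmul P (Lm a)) Q) j i k.
Proof.
move=> hP hQ hQP hL hLL.
set U := (fun i k => \sum_(a < p) Lm a i k).
have hU : rowfin U by apply: rowfin_sum.
have hUj : forall j, (1 <= j)%N -> mpow U j = (fun i k => \sum_(a < p) mpow (Lm a) j i k).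
  elim=> // -[|j] IH _.
    apply/funext => i; apply/funext => k; rewrite /= mmul1r /U.
    by apply: eq_bigr => a _; rewrite mmul1r.
  rewrite mpowS IH // (mmul_sumr _ (fun a => mpow (Lm a) j.+1) p hU).
  apply/funext => i; apply/funext => k; apply: eq_bigr => b _.
  rewrite /U (mmul_suml Lm (mpow (Lm b) j.+1) p hL) /=.
  rewrite (bigD1 b) //= big1 ?addr0 // => a hab.
  by rewrite -(mmulA_rr _ (hL a) (hL b)) hLL // mmul0l.
move=> j hj i k.
rewrite conj_pow // hUj // (mmul_sumr _ (fun a => mpow (Lm a) j) p hP).
rewrite (mmul_suml (fun a => mmul P (mpow (Lm a) j)) Q p); last first.
  by move=> a; apply: rowfin_mmul => //; exact: rowfin_mpow.
by apply: eq_bigr => a _; rewrite conj_pow.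
Qed.

Lemma GLv P Q (Lm : nat -> smat R) p (v : svec R) (x : R) :
  rowfin P -> rowfin Q -> mmul Q P = idm R -> (forall a, rowfin (Lm a)) ->
  mvec (fun i k => \sum_(a < p) Lm a i k) v = (fun i => x * v i) ->
  forall j, (1 <= j)%N -> forall i,
   mvec (mpow (mmul (mmul P (fun i k => \sum_(a < p) Lm a i k)) Q) j) (mvec P v) i =
   x ^+ j * mvec P v i.
Proof.
move=> hP hQ hQP hL hUv.
set U := (fun i k => \sum_(a < p) Lm a i k).
have hU : rowfin U by apply: rowfin_sum.
have hUj : forall j, mvec (mpow U j) v = (fun i => x ^+ j * v i).
  elim=> [|j IH]; first by rewrite /= mvec_idm; apply/funext => i; rewrite mul1r.
  rewrite mpowS mvec_mmul //; last exact: rowfin_mpow.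
  rewrite IH mvec_scale // hUv; apply/funext => i.
  by rewrite exprS mulrA [x * _]mulrC.
move=> j hj i.
have hUj' := rowfin_mpow j hU.
rewrite conj_pow // mvec_mmul //; last exact: rowfin_mmul.
rewrite -(mvec_mmul v hQ hP) hQP mvec_idm (mvec_mmul v hP hUj') hUj mvec_scale //.
Qed.

End GL.


Fixpoint Cf (f : nat -> nat) (N : nat) : nat :=
  match N with 0 => 0 | N'.+1 => (Cf f N' + (f (Cf f N') == N'))%N end.

Section Reindex.
Context {R : realType}.

Lemma lim_reindex (u v : nat -> R) (f : nat -> nat) :
  (forall k, (f k < f k.+1)%N) -> (forall k, v (f k) = u k) ->
  (forall N, (forall k, f k <> N) -> v N = 0) ->
  limn (fun N => \sum_(k < N) v k) = limn (fun N => \sum_(k < N) u k).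
Proof.
move=> hf hvu hv0.
have fmono : forall k k', (k < k')%N -> (f k < f k')%N.
  move=> k; elim=> // k' IH; rewrite ltnS leq_eqVlt => /orP[/eqP->|h] //.
  exact: ltn_trans (IH h) (hf k').
have fle : forall k k', (f k <= f k')%N = (k <= k')%N.
  move=> k k'; apply/idP/idP => h.
    by rewrite leqNgt; apply/negP => /fmono; rewrite ltnNge h.
  rewrite leq_eqVlt in h; case/orP: h => [/eqP->//|h].
  exact: ltnW (fmono _ _ h).
have fge : forall k, (k <= f k)%N.
  elim=> // k IH; exact: leq_ltn_trans IH (hf k).
have inv : forall N k, (k < Cf f N)%N = (f k < N)%N.
  elim=> [|N IH] k; first by rewrite ltn0.
  rewrite /=; case: eqP => e /=.
  - by rewrite addn1 ltnS ltnS -[in RHS]e fle.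
  - rewrite addn0 IH; apply/idP/idP => h; first exact: ltnW.
    move: h; rewrite ltnS leq_eqVlt => /orP[/eqP ek|//]; exfalso; apply: e.
    have hk : (Cf f N <= k)%N by rewrite leqNgt IH ek ltnn.
    rewrite leq_eqVlt in hk; case/orP: hk => [/eqP->//|hk].
    have h1 := fmono _ _ hk; rewrite ek in h1.
    have : ~~ (Cf f N < Cf f N)%N by rewrite ltnn.
    by rewrite IH -leqNgt => h2; move: (leq_trans h1 h2); rewrite ltnn.
have notim : forall N, f (Cf f N) != N -> forall k, f k <> N.
  move=> N hN k ek.
  have hk : (Cf f N <= k)%N by rewrite leqNgt inv ek ltnn.
  rewrite leq_eqVlt in hk; case/orP: hk => [/eqP e|hk]; first by rewrite e ek eqxx in hN.
  have h1 := fmono _ _ hk; rewrite ek in h1.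
  have : ~~ (Cf f N < Cf f N)%N by rewrite ltnn.
  by rewrite inv -leqNgt => h2; move: (leq_trans h1 h2); rewrite ltnn.
have Cfk : forall k, Cf f (f k) = k.
  move=> k; apply/eqP; rewrite eqn_leq; apply/andP; split.
    by rewrite leqNgt inv ltnn.
  rewrite leqNgt; apply/negP => /fmono; rewrite -inv ltnn //.
have PS : forall N, \sum_(k < N) v k = \sum_(k < Cf f N) u k.
  elim=> [|N IH]; first by rewrite !big_ord0.
  rewrite big_ord_recr /= IH; case: eqP => e /=.
    have -> : v N = u (Cf f N) by rewrite -hvu e.
    by rewrite addn1 big_ord_recr.
  by rewrite addn0 hv0 ?addr0 //; apply: notim; apply/eqP.
apply: (@lim_eq_comp R _ _ (Cf f) f).
- apply/cvgnyPge => A; near=> N; apply: ltnW; rewrite inv.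
  near: N; exact: nbhs_infty_gt.
- apply/cvgnyPge => A; near=> N; apply: leq_trans (fge N).
  near: N; exact: nbhs_infty_ge.
- exact: PS.
- by move=> k; rewrite PS Cfk.
Unshelve. all: end_near.
Qed.

End Reindex.

Section SI.
Context {R : realType}.
Variables (p : nat) (n : nat -> nat).
Hypothesis hp : (0 < p)%N.
Hypothesis hn : forall a, (a < p)%N -> (0 < n a)%N.

Local Notation cb := (cblk p n).
Local Notation ck := (ckk p n).
Local Notation s := (sI p n).

Definition SI (A : smat R) :=
  [/\ (forall i k, cb k <> cb i -> A i k = 0),
      (forall i k, A (s i) (s k) = A i k) &
      (forall i k, cb k = cb i -> ck k = 0 -> A (s i) k = 0)].

Lemma notim_blk a N : (a < p)%N -> (forall c, idx p n a c <> N) -> cb N <> a.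
Proof. by move=> hap h e; apply: (h (ck N)); rewrite -e idx_ckk. Qed.

Lemma SI_shift (A B B' : smat R) i j j' : SI A ->
  (forall m, B (s m) j = B' m j') -> mmul A B (s i) j = mmul A B' i j'.
Proof.
move=> [h1 h2 h3] hB.
set a := cb i.
have hap : (a < p)%N by apply: cblk_lt.
have hf : forall c, (idx p n a c < idx p n a c.+1)%N by move=> c; apply: idx_step.
set u := fun c => A i (idx p n a c) * B' (idx p n a c) j'.
have eR : mmul A B' i j' = limn (fun N => \sum_(c < N) u c).
  rewrite /mmul; apply: (@lim_reindex R u (fun m => A i m * B' m j') (idx p n a)) => // N hN.
  by rewrite h1 ?mul0r //; apply: notim_blk.
set u' := fun c => A (s i) (idx p n a c) * B (idx p n a c) j.
have eL : mmul A B (s i) j = limn (fun N => \sum_(c < N) u' c).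
  rewrite /mmul; apply: (@lim_reindex R u' (fun m => A (s i) m * B m j) (idx p n a)) => // N hN.
  by rewrite h1 ?mul0r // cblk_s //; apply: notim_blk.
rewrite eL eR -(@limn_shiftS R (fun N => \sum_(c < N) u' c)); congr (limn _).
apply/funext => N; rewrite big_ord_recl /=.
rewrite {1}/u' h3 ?mul0r ?add0r; first last.
- by rewrite ckk_idx.
- by rewrite cblk_idx.
apply: eq_bigr => c _; rewrite /u' /u /bump /= -s_idx // h2 -hB s_idx //.
Qed.

Lemma sumzero_lim (F : nat -> R) : (forall k, F k = 0) ->
  limn (fun N => \sum_(k < N) F k) = 0.
Proof.
move=> h; apply: (@limn_evcst R _ 0) => N _.
by apply: big1 => k _; apply: h.
Qed.

Lemma SI_idm : SI (idm R).
Proof.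
split.
- move=> i k h; rewrite /idm; case: eqP => // e; by rewrite e in h.
- by move=> i k; rewrite /idm (inj_eq (sI_inj hp hn)).
- move=> i k _ hk; rewrite /idm; case: eqP => // e.
  by move: hk; rewrite -e ckk_s.
Qed.

Lemma SI_mmul A B : SI A -> SI B -> SI (mmul A B).
Proof.
move=> hA hB; have [a1 a2 a3] := hA; have [b1 b2 b3] := hB.
split.
- move=> i k h; rewrite /mmul. apply: (@sumzero_lim (fun m => A i m * B m k)) => m.
  case: (eqVneq (cb m) (cb i)) => e.
    by rewrite (b1 m k) ?mulr0 // e.
  by rewrite a1 ?mul0r //; apply/eqP.
- by move=> i k; apply: SI_shift.
- move=> i k hk hk0; rewrite /mmul; apply: (@sumzero_lim (fun m => A (s i) m * B m k)) => m.
  case: (eqVneq (cb m) (cb i)) => e; last first.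
    by rewrite a1 ?mul0r // cblk_s //; apply/eqP.
  case: (eqVneq (ck m) 0%N) => e0.
    by rewrite a3 ?mul0r.
  have em : m = s (idx p n (cb i) (ck m).-1).
    by rewrite s_idx ?cblk_lt // prednK ?lt0n // -e idx_ckk.
  rewrite em b3 ?mulr0 //.
  by rewrite cblk_idx ?cblk_lt.
Qed.

Lemma SI_fun (I : Type) (F : I -> smat R) (Phi : (I -> R) -> R) (B : smat R) :
  (forall x, SI (F x)) -> Phi (fun _ => 0) = 0 ->
  (forall i k, B i k = Phi (fun x => F x i k)) -> SI B.
Proof.
move=> hF h0 hB; split.
- move=> i k h; rewrite hB -h0; congr Phi; apply/funext => x.
  by have [f1 _ _] := hF x; apply: f1.
- move=> i k; rewrite !hB; congr Phi; apply/funext => x.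
  by have [_ f2 _] := hF x; apply: f2.
- move=> i k h h'; rewrite hB -h0; congr Phi; apply/funext => x.
  by have [_ _ f3] := hF x; apply: f3.
Qed.

Lemma SI_mpow A j : SI A -> SI (mpow A j).
Proof. by move=> hA; elim: j => [|j IH]; [exact: SI_idm|exact: SI_mmul]. Qed.

Lemma SI_trm_mpow A j : SI (trm A) -> SI (trm (mpow A j)).
Proof.
move=> hA; elim: j => [|j IH]; first by rewrite /= trm_idm; exact: SI_idm.
by rewrite mpowS trm_mmul; exact: SI_mmul.
Qed.

Lemma Lam_eq a i k : Lam R p n a i k = ((cb i == a) && (k == s i))%:R.
Proof.
rewrite /Lam.
suff -> : ((cb i == a) && (cb k == a) && (ck k == (ck i).+1)) = ((cb i == a) && (k == s i)) by [].
case: (eqVneq (cb i) a) => //= ha.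
case: (eqVneq k (s i)) => [->|hne].
  by rewrite cblk_s // ckk_s // ha !eqxx.
apply/negbTE/negP => /andP[/eqP hk /eqP hkk]; apply/negP: hne; rewrite negbK.
apply/eqP; apply: (blk_inj hp hn).
  by rewrite cblk_s // hk.
by rewrite ckk_s // hkk.
Qed.

Lemma SI_Lam a : SI (Lam R p n a).
Proof.
split.
- move=> i k h; rewrite Lam_eq; case: eqP => //= e.
  by case: eqP => // ek; exfalso; apply: h; rewrite ek cblk_s.
- by move=> i k; rewrite !Lam_eq cblk_s // (inj_eq (sI_inj hp hn)).
- move=> i k _ hk; rewrite Lam_eq; case: eqP => //= _.
  by case: eqP => // ek; move: hk; rewrite ek ckk_s // ckk_s.
Qed.

Lemma SI_mexp A : (forall m, SI (mpow A m)) -> SI (mexp A).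
Proof.
move=> h; apply: (@SI_fun nat (fun m => mpow A m)
  (fun F => limn (fun N => \sum_(m < N) F m / (m`!)%:R))) => //.
by rewrite /= (@sumzero_lim (fun m => 0 / (m`!)%:R)) // => m; rewrite mul0r.
Qed.

Lemma SI_trm_mexp A : (forall m, SI (trm (mpow A m))) -> SI (trm (mexp A)).
Proof.
move=> h; apply: (@SI_fun nat (fun m => trm (mpow A m))
  (fun F => limn (fun N => \sum_(m < N) F m / (m`!)%:R))) => //.
by rewrite /= (@sumzero_lim (fun m => 0 / (m`!)%:R)) // => m; rewrite mul0r.
Qed.

Lemma SI_tflow (L : nat -> smat R) (t : nat -> nat -> R) :
  (forall a j, SI (mpow (L a) j)) -> SI (tflow p L t).
Proof.
move=> h; apply: (@SI_fun (nat * nat)%type (fun x : nat * nat => mpow (L x.1) x.2.+1)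
  (fun F => \sum_(a < p) limn (fun N => \sum_(j < N) t a j.+1 * F (nat_of_ord a, nat_of_ord j)))) => //.
by rewrite /=; apply: big1 => a _; rewrite (@sumzero_lim (fun j => t a j.+1 * 0)) // => j; rewrite mulr0.
Qed.

Lemma SI_trm_tflow (L : nat -> smat R) (t : nat -> nat -> R) :
  (forall a j, SI (trm (mpow (L a) j))) -> SI (trm (tflow p L t)).
Proof.
move=> h; apply: (@SI_fun (nat * nat)%type (fun x : nat * nat => trm (mpow (L x.1) x.2.+1))
  (fun F => \sum_(a < p) limn (fun N => \sum_(j < N) t a j.+1 * F (nat_of_ord a, nat_of_ord j)))) => //.
by rewrite /=; apply: big1 => a _; rewrite (@sumzero_lim (fun j => t a j.+1 * 0)) // => j; rewrite mulr0.
Qed.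

Lemma SI_trm_mopp A : SI (trm A) -> SI (trm (mopp A)).
Proof.
move=> h; apply: (@SI_fun unit (fun _ : unit => trm A) (fun F => - F tt)) => //.
exact: oppr0.
Qed.

End SI.


Section Sel.
Context {R : realType}.

Lemma sel_l (f : nat -> nat) (A : smat R) i j :
  mmul (fun i k => (k == f i)%:R) A i j = A (f i) j.
Proof.
rewrite (mmul_rowb (K := (f i).+1)); last first.
  by move=> k hk; case: eqP => // e; move: hk; rewrite e ltnn.
rewrite big_ord_recr /= eqxx mul1r big1 ?add0r // => k _.
by rewrite (ltn_eqF (ltn_ord k)) mul0r.
Qed.

Lemma sel_v (f : nat -> nat) (v : svec R) i :
  mvec (fun i k => (k == f i)%:R) v i = v (f i).
Proof.
rewrite (mvec_b (K := (f i).+1)); last first.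
  by move=> k hk; case: eqP => // e; move: hk; rewrite e ltnn.
rewrite big_ord_recr /= eqxx mul1r big1 ?add0r // => k _.
by rewrite (ltn_eqF (ltn_ord k)) mul0r.
Qed.

Lemma sel_r (f : nat -> nat) (A : smat R) i j :
  mmul A (trm (fun i k => (k == f i)%:R)) i j = A i (f j).
Proof.
rewrite (mmul_colb (K := (f j).+1)); last first.
  by move=> k hk; rewrite /trm; case: eqP => // e; move: hk; rewrite e ltnn.
rewrite big_ord_recr /= /trm eqxx mulr1 big1 ?add0r // => k _.
by rewrite (ltn_eqF (ltn_ord k)) mulr0.
Qed.

Lemma rowfin_sel (f : nat -> nat) : rowfin (fun i k => (k == f i)%:R : R).
Proof.
by move=> i; exists (f i).+1 => k hk; case: eqP => // e; move: hk; rewrite e ltnn.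
Qed.

Lemma rowfin_lower (A : smat R) : lower_tri A -> rowfin A.
Proof. by move=> h i; exists i.+1 => k hk; apply: h. Qed.

Lemma rowfin_upper (A : smat R) : upper_tri A -> rowfin (trm A).
Proof. by move=> h i; exists i.+1 => k hk; apply: h. Qed.

End Sel.

Section Struct.
Context {R : realType}.
Variables (p : nat) (n : nat -> nat).
Hypothesis hp : (0 < p)%N.
Hypothesis hn : forall a, (a < p)%N -> (0 < n a)%N.

Local Notation cb := (cblk p n).
Local Notation ck := (ckk p n).
Local Notation s := (sI p n).

Lemma Ups_eq : Ups R p n = (fun i k => (k == s i)%:R).
Proof.
apply/funext => i; apply/funext => k; rewrite /Ups.
under eq_bigr => a _ do rewrite (Lam_eq _ _ hp hn).
rewrite (bigD1 (Ordinal (cblk_lt hp hn i))) //= eqxx /= big1 ?addr0 // => a ha.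
suff -> : (cb i == a) = false by [].
by apply/negbTE; apply: contra ha => /eqP e; apply/eqP; apply: val_inj; rewrite /= e.
Qed.

Lemma rowfin_Lam a : rowfin (Lam R p n a).
Proof.
move=> i; exists (s i).+1 => k hk; rewrite (Lam_eq _ _ hp hn).
case: (eqVneq k (s i)) => [e|_]; last by rewrite andbF.
by move: hk; rewrite e ltnn.
Qed.

Lemma rowfin_Ups : rowfin (Ups R p n).
Proof. rewrite Ups_eq; exact: rowfin_sel. Qed.

Lemma Lam_orth a b : a != b -> mmul (Lam R p n a) (Lam R p n b) = (fun _ _ => 0).
Proof.
move=> hab; apply/funext => i; apply/funext => k.
rewrite /mmul (@sumzero_lim R (fun m => Lam R p n a i m * Lam R p n b m k)) // => m.
rewrite !(Lam_eq _ _ hp hn).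
case: (eqVneq m (s i)) => [e|]; last by rewrite andbF mul0r.
rewrite e cblk_s //.
case: (eqVneq (cb i) a) => [ea|]; last by rewrite mul0r.
by rewrite ea (negbTE hab) mulr0.
Qed.

Lemma Ups_chi a (x : R) : mvec (Ups R p n) (chi p n a x) = (fun i => x * chi p n a x i).
Proof.
apply/funext => i; rewrite Ups_eq sel_v /chi cblk_s // ckk_s //.
by case: eqP => _; rewrite ?exprS ?mulr0.
Qed.

Lemma SI_W0 (t : nat -> nat -> R) : SI p n (W0 p n t).
Proof.
apply: SI_mexp => // m; apply: SI_mpow => //.
apply: SI_tflow => // a j; apply: SI_mpow => //; exact: (SI_Lam _ _ hp hn).
Qed.

Lemma SI_Wb0inv (t : nat -> nat -> R) : SI p n (trm (Wb0inv p n t)).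
Proof.
apply: SI_trm_mexp => // m; apply: SI_trm_mpow => //.
apply: SI_trm_mopp => //; apply: SI_trm_tflow => // a j; apply: SI_trm_mpow => //.
exact: (SI_Lam _ _ hp hn).
Qed.

End Struct.


Local Open Scope classical_set_scope.
Local Open Scope ring_scope.

Theorem proposition3p9 (R : realType)
  (mu : {finite_measure set R -> \bar R}) (I : interval R)
  (p1 p2 : nat) (n1 n2 : nat -> nat) (w1 w2 : nat -> R -> R)
  (t tb : nat -> nat -> R)
  (S Si Sb Sbi : smat R) :
  (0 < p1)%N -> (0 < p2)%N ->
  (forall a, (a < p1)%N -> (0 < n1 a)%N) ->
  (forall b, (b < p2)%N -> (0 < n2 b)%N) ->
  (* the moment integrals converge *)
  (forall i j, mu.-integrable [set` I]
     (fun x => (x ^+ (ckk p1 n1 i + ckk p2 n2 j) * w1 (cblk p1 n1 i) x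
                * w2 (cblk p2 n2 j) x)%:E)) ->
  (* the series defining g(t) = (W_0(t) g) bar W_0(t)^{-1} converge *)
  (forall i j, cvgn (fun N => \sum_(k < N)
      W0 p1 n1 t i k * moment mu I p1 p2 n1 n2 w1 w2 k j)) ->
  (forall i j, cvgn (fun N => \sum_(k < N)
      mmul (W0 p1 n1 t) (moment mu I p1 p2 n1 n2 w1 w2) i k
      * Wb0inv p2 n2 tb k j)) ->
  (* S unit lower triangular, with (lower triangular) inverse Si = S^{-1} *)
  lower_tri S -> (forall i, S i i = 1) ->
  lower_tri Si -> mmul S Si = idm R -> mmul Si S = idm R ->
  (* bar S upper triangular invertible, with (upper triangular) inverse Sbi *)
  upper_tri Sb ->
  upper_tri Sbi -> mmul Sb Sbi = idm R -> mmul Sbi Sb = idm R ->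
  (* the factorization g(t) = S^{-1} bar S *)
  gt p1 p2 n1 n2 (moment mu I p1 p2 n1 n2 w1 w2) t tb = mmul Si Sb ->
  let L a := mmul (mmul S (Lam R p1 n1 a)) Si in
  let Lb b := mmul (mmul Sb (trm (Lam R p2 n2 b))) Sbi in
  let J := mmul (mmul S (Ups R p1 n1)) Si in
  let A a x := mvec S (chi p1 n1 a x) in
  let Ab b x := mvec (trm Sbi) (chi p2 n2 b x) in
  forall j, (1 <= j)%N ->
    (forall i k, mpow J j i k = \sum_(a < p1) mpow (L a) j i k) /\
    (forall i k, mpow J j i k = \sum_(b < p2) mpow (Lb b) j i k) /\
    (forall a', (a' < p1)%N -> forall (x : R) i,
        mvec (mpow J j) (A a' x) i = x ^+ j * A a' x i) /\
    (forall b', (b' < p2)%N -> forall (x : R) i,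
        mvec (trm (mpow J j)) (Ab b' x) i = x ^+ j * Ab b' x i).
Proof.
move=> hp1 hp2 hn1 hn2 _ _ _ hSl _ hSil hSSi hSiS hSbu hSbiu hSbSbi hSbiSb hfac.
move=> L Lb J A Ab j hj.
set g := moment mu I p1 p2 n1 n2 w1 w2.
set s1 := sI p1 n1; set s2 := sI p2 n2.
have rS := rowfin_lower _ hSl.
have rSi := rowfin_lower _ hSil.
have rSbT := rowfin_upper _ hSbu.
have rSbiT := rowfin_upper _ hSbiu.
have rU1 := @rowfin_Ups R _ _ hp1 hn1.
have rU2 := @rowfin_Ups R _ _ hp2 hn2.
have hg : forall m k, g (s1 m) k = g m (s2 k).
  move=> m k; rewrite /g /moment /s1 /s2 !cblk_s // !ckk_s //.
  by rewrite addSn addnS.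
set X := mmul (W0 p1 n1 t) g.
have hX : forall i k, X (s1 i) k = X i (s2 k).
  move=> i k; apply: (SI_shift _ _ hp1 hn1) => //; exact: SI_W0.
have hG : forall i k, mmul Si Sb (s1 i) k = mmul Si Sb i (s2 k).
  move=> i k; rewrite -hfac /gt -/g -/X.
  have e : forall a b, mmul X (Wb0inv p2 n2 tb) a b =
      mmul (trm (Wb0inv p2 n2 tb)) (trm X) b a.
    by move=> a b; rewrite -trm_mmul.
  rewrite !e; symmetry; apply: (SI_shift _ _ hp2 hn2).
    exact: SI_Wb0inv.
  by move=> m; rewrite /trm hX.
have E1 : mmul (Ups R p1 n1) (mmul Si Sb) = mmul (mmul Si Sb) (trm (Ups R p2 n2)).
  apply/funext => i; apply/funext => k.
  by rewrite (Ups_eq _ _ hp1 hn1) (Ups_eq _ _ hp2 hn2) sel_l sel_r hG.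
have rSU := rowfin_mmul rS rU1.
have rJ : rowfin J by apply: rowfin_mmul.
have JSb : mmul J Sb = mmul Sb (trm (Ups R p2 n2)).
  rewrite /J (mmulA_rr _ rSU rSi) (mmulA_rr _ rS rU1) E1.
  rewrite -(mmulA_rc _ _ _ rSi) //.
  by rewrite -(mmulA_rr _ rS rSi) hSSi mmul1l.
have EJ : J = mmul (mmul Sb (trm (Ups R p2 n2))) Sbi.
  by rewrite -JSb -(mmulA_rc _ _ _ rJ) // hSbSbi mmul1r.
set J' := mmul (mmul (trm Sbi) (Ups R p2 n2)) (trm Sb).
have EJ' : trm J = J'.
  by rewrite EJ trm_mmul trm_mmul /J' (mmulA_rr _ rSbiT rU2).
have rJ' : rowfin J' by apply: rowfin_mmul => //; apply: rowfin_mmul.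
have QP : mmul (trm Sb) (trm Sbi) = idm R by rewrite -trm_mmul hSbiSb trm_idm.
have hJT : trm (mpow J j) = mpow J' j by rewrite -EJ' trm_mpow // EJ'.
split; [|split; [|split]].
- move=> i k; rewrite /J /L.
  apply: (@GL R _ _ (Lam R p1 n1)) => //.
  + exact: rowfin_Lam.
  + by move=> a b _ _ hab; apply: Lam_orth.
- move=> i k.
  have -> : mpow J j i k = mpow J' j k i by rewrite -hJT.
  have eLb : forall b, trm (Lb b) = mmul (mmul (trm Sbi) (Lam R p2 n2 b)) (trm Sb).
    move=> b; rewrite /Lb trm_mmul trm_mmul mmulA_rr //.
    exact: rowfin_Lam.
  have -> : \sum_(b < p2) mpow (Lb b) j i k = \sum_(b < p2) mpow (trm (Lb b)) j k i.
    apply: eq_bigr => b _; rewrite -trm_mpow // eLb.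
    apply: rowfin_mmul => //; apply: rowfin_mmul => //; exact: rowfin_Lam.
  under eq_bigr => b _ do rewrite eLb.
  apply: (@GL R _ _ (Lam R p2 n2)) => //.
  + exact: rowfin_Lam.
  + by move=> a b _ _ hab; apply: Lam_orth.
- move=> a' _ x i; rewrite /J /A.
  apply: (@GLv R _ _ (Lam R p1 n1)) => //.
  + exact: rowfin_Lam.
  + exact: Ups_chi.
- move=> b' _ x i; rewrite hJT /Ab.
  apply: (@GLv R _ _ (Lam R p2 n2)) => //.
  + exact: rowfin_Lam.
  + exact: Ups_chi.
Qed.
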